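(* Let $\mathbb G=V_1\times V_2$ be a step-two Carnot group with $\mathcal A(V_1\times V_2)\subsetneq\mathcal A_h(\mathbb G)$. Then there are $x_1,x_2,x_3\in V_1$ such that $\operatorname{Lie}(x_1,x_2,x_3)$ is isomorphic to $\mathbb F_3$ (equivalently, $[x_1,x_2],[x_1,x_3],[x_2,x_3]$ are linearly independent). In addition, there is a bilinear map $b:V_1\times V_2\to\mathbb R$ such that $b(x,[x,x'])=0$ for all $x,x'\in V_1$ and $b(x_1,[x_2,x_3])=1$.
   Context: A step-two Carnot group is $\mathbb G=V_1\times V_2$ ($V_1,V_2$ finite-dimensional real vector spaces, $V_2\ne\{0\}$) with a bilinear skew-symmetric $[\cdot,\cdot]:V_1\times V_1\to V_2$ whose image spans $V_2$, and group law $(x,z)\cdot(x',z')=(x+x',z+z'+[x,x'])$. $\mathcal A_h(\mathbb G)$ is the space of maps $f:\mathbb G\to\mathbb R$ such that for all $(x,z)\in\mathbb G$, $y\in V_1$, $t\mapsto f((x,z)\cdot(ty,0))$ is affine; $\mathcal A(V_1\times V_2)$ is the space of maps affine in the usual sense. For $x_1,x_2,x_3\in V_1$, $\operatorname{Lie}(x_1,x_2,x_3):=\operatorname{span}\{x_1,x_2,x_3\}\times\operatorname{span}\{[x_i,x_j]:i,j\in\{1,2,3\}\}$ with the restricted bracket; it is isomorphic (via a bijective Carnot morphism) to $\mathbb F_3=\Lambda^1(\mathbb R^3)\times\Lambda^2(\mathbb R^3)$ (bracket $\theta\wedge\theta'$) exactly when $\dim\operatorname{span}\{[x_i,x_j]\}=3$.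 *)

(* Defs.v *)
From HB Require Import structures.
From mathcomp Require Import all_boot all_order all_algebra.
From mathcomp Require Import reals.
Set Implicit Arguments. Unset Strict Implicit. Unset Printing Implicit Defensive.
Import Order.TTheory GRing.Theory Num.Theory.
Local Open Scope ring_scope.

Section CarnotDefs.
Variables (R : realType) (V1 V2 : vectType R).

Definition lin_form (V : vectType R) (l : V -> R) : Prop :=
  forall (a : R) (u v : V), l (a *: u + v) = a * l u + l v.

Definition bilin11 (br : V1 -> V1 -> V2) : Prop :=
  (forall y, forall a u v, br (a *: u + v) y = a *: br u y + br v y) /\
  (forall x, forall a u v, br x (a *: u + v) = a *: br x u + br x v).

Definition step2_carnot (br : V1 -> V1 -> V2) : Prop :=
  [/\ bilin11 br,
      (forall x y, br x y = - br y x),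
      (exists s : seq (V1 * V1), <<[seq br p.1 p.2 | p <- s]>>%VS = fullv)
    &
      (0 < \dim (fullv : {vspace V2}))%N].

Definition carnot_mul (br : V1 -> V1 -> V2) (p q : V1 * V2) : V1 * V2 :=
  (p.1 + q.1, p.2 + q.2 + br p.1 q.1).

Definition affine_fun (g : R -> R) : Prop :=
  exists a c : R, forall t, g t = a * t + c.

Definition horiz_affine (br : V1 -> V1 -> V2) (f : V1 * V2 -> R) : Prop :=
  forall (p : V1 * V2) (y : V1),
    affine_fun (fun t => f (carnot_mul br p (t *: y, 0))).

Definition usual_affine (f : V1 * V2 -> R) : Prop :=
  exists (l1 : V1 -> R) (l2 : V2 -> R) (c : R),
    [/\ lin_form l1, lin_form l2 & forall p, f p = l1 p.1 + l2 p.2 + c].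

Definition bilin12 (b : V1 -> V2 -> R) : Prop :=
  (forall z, lin_form (fun x => b x z)) /\ (forall x, lin_form (b x)).

End CarnotDefs.

(* Main.v *)
Require Import Defs.
From HB Require Import structures.
From mathcomp Require Import all_boot all_order all_algebra.
From mathcomp Require Import reals.
From mathcomp Require Import ring lra.
From Stdlib Require Import Classical.
Import GRing.Theory Num.Theory.
Local Open Scope ring_scope.
Set Implicit Arguments. Unset Strict Implicit.

Section Aux.
Variable R : realType.

Lemma aff_val (h : R -> R) : affine_fun h -> forall t, h t = h 0 + t * (h 1 - h 0).
Proof. by case=> a [c H] t; rewrite !H; ring. Qed.

Lemma aff_ext (h h' : R -> R) : (forall t, h t = h' t) -> affine_fun h' -> affine_fun h.
Proof. by move=> E [a [c H]]; exists a, c => t; rewrite E H. Qed.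

Lemma aff_comb (h1 h2 : R -> R) u v : affine_fun h1 -> affine_fun h2 ->
  affine_fun (fun t => u * h1 t + v * h2 t).
Proof.
by move=> [a1 [c1 H1]] [a2 [c2 H2]]; exists (u * a1 + v * a2), (u * c1 + v * c2) => t;
  rewrite H1 H2; ring.
Qed.

Variable V : vectType R.
Lemma linD {l : V -> R} : lin_form l -> forall u v, l (u + v) = l u + l v.
Proof. by move=> H u v; rewrite -{1}(scale1r u) H mul1r. Qed.
Lemma lin0 {l : V -> R} : lin_form l -> l 0 = 0.
Proof. by move=> H; have := linD H 0 0; rewrite addr0 => E; lra. Qed.
Lemma linZ {l : V -> R} : lin_form l -> forall a u, l (a *: u) = a * l u.
Proof. by move=> H a u; rewrite -(addr0 (a *: u)) H (lin0 H) addr0. Qed.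
Lemma linN {l : V -> R} : lin_form l -> forall u, l (- u) = - l u.
Proof. by move=> H u; rewrite -scaleN1r linZ // mulN1r. Qed.
Lemma linB {l : V -> R} : lin_form l -> forall u v, l (u - v) = l u - l v.
Proof. by move=> H u v; rewrite linD // linN. Qed.
Lemma lin_sum {l : V -> R} : lin_form l -> forall n (F : 'I_n -> V),
  l (\sum_(i < n) F i) = \sum_(i < n) l (F i).
Proof. by move=> H n F; apply: (big_morph l (linD H) (lin0 H)). Qed.

Lemma aff_mid (h : R -> R) : affine_fun h -> h 1 + h (-1) = 2 * h 0.
Proof. by move=> H; rewrite (aff_val H (-1)); ring. Qed.
Lemma aff_mid2 (h : R -> R) : affine_fun h -> h 2 + h (-2) = 2 * h 0.
Proof. by move=> H; rewrite (aff_val H (-2)) (aff_val H 2); ring. Qed.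
Lemma aff_id : affine_fun (fun t : R => t).
Proof. by exists 1, 0 => t; ring. Qed.

Lemma lin_ext {f f' : V -> R} : (forall x, f x = f' x) -> lin_form f' -> lin_form f.
Proof. by move=> E H a u v; rewrite !E H. Qed.

Lemma line_aff_lin (phi : V -> R) :
  (forall x y, affine_fun (fun t => phi (x + t *: y))) -> lin_form (fun x => phi x - phi 0).
Proof.
move=> H.
have hom : forall y t, phi (t *: y) = phi 0 + t * (phi y - phi 0).
  move=> y t; have := aff_val (H 0 y) t; rewrite scale0r scale1r !add0r => ->.
  by [].
have add : forall u v, phi (u + v) = phi u + phi v - phi 0.
  move=> u v; have := aff_mid (H (u + v) (u - v)).
  rewrite scale1r scale0r addr0 scaleN1r opprB.
  have -> : u + v + (u - v) = 2 *: u by rewrite scaler_nat mulr2n addrACA subrr addr0.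
  have -> : u + v + (v - u) = 2 *: v.
    by rewrite scaler_nat mulr2n (addrC u v) addrACA subrr addr0.
  rewrite !hom => E; lra.
move=> a u v /=; rewrite add hom; ring.
Qed.
End Aux.
Section Carnot.
Variables (R : realType) (V1 V2 : vectType R) (br : V1 -> V1 -> V2).
Hypothesis Hbil : bilin11 br.
Hypothesis Hskew : forall x y, br x y = - br y x.

Lemma brDl u v y : br (u + v) y = br u y + br v y.
Proof. by rewrite -{1}(scale1r u) Hbil.1 scale1r. Qed.
Lemma brDr x u v : br x (u + v) = br x u + br x v.
Proof. by rewrite -{1}(scale1r u) Hbil.2 scale1r. Qed.
Lemma br0l y : br 0 y = 0.
Proof. have E := brDl 0 0 y; rewrite addr0 in E. by have := congr1 (fun v => v - br 0 y) E; rewrite subrr addrK. Qed.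
Lemma br0r x : br x 0 = 0.
Proof. have E := brDr x 0 0; rewrite addr0 in E. by have := congr1 (fun v => v - br x 0) E; rewrite subrr addrK. Qed.
Lemma brZl a u y : br (a *: u) y = a *: br u y.
Proof. by rewrite -(addr0 (a *: u)) Hbil.1 br0l addr0. Qed.
Lemma brZr a x u : br x (a *: u) = a *: br x u.
Proof. by rewrite -(addr0 (a *: u)) Hbil.2 br0r addr0. Qed.
Lemma brNl u y : br (- u) y = - br u y.
Proof. by rewrite -scaleN1r brZl scaleN1r. Qed.
Lemma brNr x u : br x (- u) = - br x u.
Proof. by rewrite -scaleN1r brZr scaleN1r. Qed.
Lemma brBl u v y : br (u - v) y = br u y - br v y.
Proof. by rewrite brDl brNl. Qed.
Lemma brBr x u v : br x (u - v) = br x u - br x v.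
Proof. by rewrite brDr brNr. Qed.

Definition dz (w : V2) (g : V1 * V2 -> R) : V1 * V2 -> R :=
  fun p => g (p.1, p.2 + w) - g p.

Lemma Heis g : horiz_affine br g -> forall x z a c,
  affine_fun (fun s => g (x, z + s *: br a c)).
Proof.
move=> H x z a c.
have H1 := H (x + a, z + br x a) c.
have H2 := H (x - a, z - br x a) (- c).
apply: (aff_ext _ (aff_comb (2^-1) (2^-1) H1 H2)) => t /=.
have HM := aff_val (H (x, z + t *: br a c) (a + t *: c)) (-1).
rewrite /carnot_mul /= !scale0r !scale1r br0r !addr0 in HM *.
have E1 : (x + (a + t *: c), z + t *: br a c + br x (a + t *: c)) =
          (x + a + t *: c, z + br x a + br (x + a) (t *: c)).
  congr (_, _); first by rewrite addrA.
  rewrite brDr brDl !brZr -!addrA; congr (_ + _).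
  by rewrite addrC -addrA; congr (_ + _); rewrite addrC.
have E2 : (x + (-1) *: (a + t *: c), z + t *: br a c + br x ((-1) *: (a + t *: c))) =
          (x - a + t *: - c, z - br x a + br (x - a) (t *: - c)).
  congr (_, _).
    by rewrite scaleN1r opprD scalerN addrA.
  rewrite scaleN1r brNr brDr brBl !brZr brNr !scalerN opprD -!addrA; congr (_ + _).
  rewrite addrC -addrA; congr (_ + _).
  by rewrite brNr scalerN opprK.
rewrite E1 E2 in HM; rewrite HM; lra.
Qed.


Lemma Heis_scale g : horiz_affine br g -> forall p a c s,
  dz (s *: br a c) g p = s * dz (br a c) g p.
Proof.
move=> H [x z] a c s; have := aff_val (Heis H x z a c) s.
rewrite /dz /= scale0r scale1r addr0 => ->; ring.
Qed.

Lemma Heis2 g : horiz_affine br g -> forall p a c,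
  dz (br a c) (dz (br a c) g) p = 0.
Proof.
move=> H [x z] a c; have := aff_val (Heis H x z a c) 2.
rewrite /dz /= scale0r scale1r addr0 scaler_nat mulr2n addrA => ->; ring.
Qed.

Lemma HA_dz g w : horiz_affine br g -> horiz_affine br (dz w g).
Proof.
move=> H p y.
have E : forall t, dz w g (carnot_mul br p (t *: y, 0)) =
  1 * g (carnot_mul br (p.1, p.2 + w) (t *: y, 0)) + (-1) * g (carnot_mul br p (t *: y, 0)).
  move=> t; rewrite /dz /carnot_mul /= !addr0 (addrAC p.2); ring.
exact: (aff_ext E (aff_comb 1 (-1) (H _ y) (H p y))).
Qed.

Lemma lin_zero (V : vectType R) : lin_form (fun _ : V => (0 : R)).
Proof. by move=> a u v; ring. Qed.
Lemma lin_add (V : vectType R) (l l' : V -> R) : lin_form l -> lin_form l' ->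
  lin_form (fun x => l x + l' x).
Proof. by move=> H H' a u v; rewrite H H'; ring. Qed.
Lemma lin_scale (V : vectType R) (l : V -> R) c : lin_form l ->
  lin_form (fun x => c * l x).
Proof. by move=> H a u v; rewrite H; ring. Qed.

Lemma UA_ext (f f' : V1 * V2 -> R) : (forall p, f p = f' p) ->
  usual_affine f' -> usual_affine f.
Proof.
move=> E [l1 [l2 [c [H1 H2 H3]]]]; exists l1, l2, c; split => // p.
by rewrite E H3.
Qed.

Lemma UA_const c : usual_affine (fun _ : V1 * V2 => c).
Proof.
exists (fun _ => 0), (fun _ => 0), c; split; try exact: lin_zero.
by move=> p; ring.
Qed.

Lemma UA_add (f f' : V1 * V2 -> R) : usual_affine f -> usual_affine f' ->
  usual_affine (fun p => f p + f' p).
Proof.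
move=> [l1 [l2 [c [H1 H2 H3]]]] [l1' [l2' [c' [H1' H2' H3']]]].
exists (fun x => l1 x + l1' x), (fun x => l2 x + l2' x), (c + c').
split; [exact: lin_add | exact: lin_add | move=> p; rewrite H3 H3'; ring].
Qed.

Lemma UA_scale c (f : V1 * V2 -> R) : usual_affine f ->
  usual_affine (fun p => c * f p).
Proof.
move=> [l1 [l2 [d [H1 H2 H3]]]].
exists (fun x => c * l1 x), (fun x => c * l2 x), (c * d).
split; [exact: lin_scale | exact: lin_scale | move=> p; rewrite H3; ring].
Qed.

Lemma UA_dz g w : usual_affine g -> usual_affine (dz w g).
Proof.
move=> [l1 [l2 [c [H1 H2 H3]]]].
apply: (UA_ext _ (UA_const (l2 w))) => p.
by rewrite /dz !H3 /= (linD H2); ring.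
Qed.

Lemma dz_comm w w' g p : dz w (dz w' g) p = dz w' (dz w g) p.
Proof. by rewrite /dz /= (addrAC p.2); ring. Qed.

Lemma dz_add u u' g p : dz (u + u') g p = dz u g p + dz u' g p + dz u (dz u' g) p.
Proof. by rewrite /dz /= addrA (addrAC p.2); ring. Qed.

Lemma descend (s : seq (V1 * V1)) f : horiz_affine br f -> ~ usual_affine f ->
  exists g, [/\ horiz_affine br g, ~ usual_affine g &
    forall q, q \in s -> usual_affine (dz (br q.1 q.2) g)].
Proof.
move=> Hf Nf; elim: s => [|q s [g [Hg Ng Hs]]].
  by exists f; split.
case: (classic (usual_affine (dz (br q.1 q.2) g))) => Hq.
  exists g; split => // q'; rewrite inE => /orP [/eqP -> //|]; exact: Hs.
exists (dz (br q.1 q.2) g); split => //; first exact: HA_dz.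
move=> q'; rewrite inE => /orP [/eqP ->|/Hs Hq'].
  by apply: (UA_ext _ (UA_const 0)) => p; rewrite (Heis2 Hg).
apply: (UA_ext _ (UA_dz (br q.1 q.2) Hq')) => p; exact: dz_comm.
Qed.

Lemma span_ind (s : seq (V1 * V1)) :
  <<[seq br p.1 p.2 | p <- s]>>%VS = fullv ->
  forall P : V2 -> Prop, P 0 -> (forall u v, P u -> P v -> P (u + v)) ->
  (forall q c, q \in s -> P (c *: br q.1 q.2)) -> forall u, P u.
Proof.
move=> Hsp P P0 PD PZ u.
set X := [seq br p.1 p.2 | p <- s].
have Hu : u \in <<in_tuple X>>%VS by rewrite /= Hsp memvf.
rewrite (coord_span Hu); apply: big_ind => // i _.
have Hi : (i < size s)%N by rewrite -(size_map (fun p => br p.1 p.2)); exact: ltn_ord.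
rewrite /= (nth_map (0, 0)) //; apply: PZ; exact: mem_nth.
Qed.

Lemma finish (s : seq (V1 * V1)) (b : V1 -> V2 -> R) x0 z0 :
  <<[seq br p.1 p.2 | p <- s]>>%VS = fullv ->
  bilin12 b -> (forall x x', b x (br x x') = 0) -> b x0 z0 <> 0 ->
  exists x1 x2 x3 : V1,
    free [:: br x1 x2; br x1 x3; br x2 x3] /\
    exists b : V1 -> V2 -> R,
      [/\ bilin12 b,
          (forall x x' : V1, b x (br x x') = 0)
        & b x1 (br x2 x3) = 1].
Proof.
move=> Hsp [Hb1 Hb2] Hb Hnz.
have [q [_ Hq]] : exists q, q \in s /\ b x0 (br q.1 q.2) <> 0.
  apply: NNPP => Hn; apply: Hnz.
  refine (span_ind Hsp (P := fun u => b x0 u = 0) _ _ _ z0).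
  - exact: lin0.
  - by move=> u v Hu Hv; rewrite (linD (Hb2 x0)) Hu Hv addr0.
  - move=> q' c Hq'; rewrite (linZ (Hb2 x0)).
    case: (classic (b x0 (br q'.1 q'.2) = 0)) => [->|Hne]; first by rewrite mulr0.
    by exfalso; apply: Hn; exists q'.
set k := b x0 (br q.1 q.2).
have pol : forall x y z, b x (br y z) = - b y (br x z).
  move=> x y z; have := Hb (x + y) z.
  rewrite brDl (linD (Hb2 _)) !(linD (Hb1 _)) !Hb => E; lra.
have Hx : b (k^-1 *: x0) (br q.1 q.2) = 1.
  by rewrite (linZ (Hb1 _)) mulVf //; apply/eqP.
exists (k^-1 *: x0), q.1, q.2; split; last by exists b; split; [split | exact: Hb | exact: Hx].
set x1 := k^-1 *: x0 in Hx *; set x2 := q.1 in Hx *; set x3 := q.2 in Hx *.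
apply/freeP => K HK.
rewrite !big_ord_recl big_ord0 /= addr0 in HK.
have E3 := congr1 (b x3) HK; have E2 := congr1 (b x2) HK; have E1 := congr1 (b x1) HK.
rewrite !(linD (Hb2 _)) !(linZ (Hb2 _)) !(lin0 (Hb2 _)) in E1 E2 E3.
have a1 : b x3 (br x1 x2) = 1 by rewrite pol Hskew (linN (Hb2 _)) opprK.
have a2 : b x3 (br x1 x3) = 0 by rewrite Hskew (linN (Hb2 _)) Hb oppr0.
have a3 : b x3 (br x2 x3) = 0 by rewrite Hskew (linN (Hb2 _)) Hb oppr0.
have a4 : b x2 (br x1 x2) = 0 by rewrite Hskew (linN (Hb2 _)) Hb oppr0.
have a5 : b x2 (br x1 x3) = -1 by rewrite pol Hx.
have a6 : b x2 (br x2 x3) = 0 by rewrite Hb.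
have a7 : b x1 (br x1 x2) = 0 by rewrite Hb.
have a8 : b x1 (br x1 x3) = 0 by rewrite Hb.
rewrite a1 a2 a3 in E3; rewrite a4 a5 a6 in E2; rewrite a7 a8 Hx in E1.
have K0 : K ord0 = 0 by lra.
have K1 : K (lift ord0 ord0) = 0 by lra.
have K2 : K (lift ord0 (lift ord0 ord0)) = 0 by lra.
case=> [[|[|[|//]]] Hi].
- by rewrite -K0; congr K; apply: val_inj.
- by rewrite -K1; congr K; apply: val_inj.
- by rewrite -K2; congr K; apply: val_inj.
Qed.

Lemma lin_from_span (s : seq (V1 * V1)) (F : V2 -> R) :
  <<[seq br p.1 p.2 | p <- s]>>%VS = fullv ->
  (forall u v, F (u + v) = F u + F v) ->
  (forall q c, q \in s -> F (c *: br q.1 q.2) = c * F (br q.1 q.2)) ->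
  lin_form F.
Proof.
move=> Hsp FD FZ.
have F0 : F 0 = 0 by have := FD 0 0; rewrite addr0 => E; lra.
have FS : forall u a, F (a *: u) = a * F u.
  move=> u; refine (span_ind Hsp (P := fun u => forall a, F (a *: u) = a * F u) _ _ _ u).
  - by move=> a; rewrite scaler0 F0 mulr0.
  - by move=> u1 u2 H1 H2 a; rewrite scalerDr !FD H1 H2 mulrDr.
  - by move=> q c Hq a; rewrite scalerA !FZ //; ring.
by move=> a u v; rewrite FD FS.
Qed.

Section Core.
Variables (s : seq (V1 * V1)) (g : V1 * V2 -> R).
Hypothesis Hsp : <<[seq br p.1 p.2 | p <- s]>>%VS = fullv.
Hypothesis Hg : horiz_affine br g.
Hypothesis Ng : ~ usual_affine g.
Hypothesis Hs : forall q, q \in s -> usual_affine (dz (br q.1 q.2) g).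

Lemma Hall u : usual_affine (dz u g).
Proof.
refine (span_ind Hsp (P := fun u => usual_affine (dz u g)) _ _ _ u).
- by apply: (UA_ext _ (UA_const 0)) => [[x z]]; rewrite /dz /= addr0 subrr.
- move=> u1 u2 H1 H2; apply: (UA_ext _ (UA_add (UA_add H1 H2) (UA_dz u1 H2))) => p.
  exact: dz_add.
- move=> q c Hq; apply: (UA_ext _ (UA_scale c (Hs Hq))) => p.
  exact: Heis_scale.
Qed.

Definition S u u' := g (0, u + u') - g (0, u) - g (0, u') + g (0, 0).

Lemma HS_dd u u' p : dz u (dz u' g) p = S u u'.
Proof.
have [l1 [l2 [c [H1 H2 H3]]]] := Hall u'.
have -> : S u u' = dz u' g (0, u) - dz u' g (0, 0).
  by rewrite /S /dz /= add0r; ring.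
have -> : dz u (dz u' g) p = dz u' g (p.1, p.2 + u) - dz u' g p by [].
by rewrite !H3 /= !(linD H2) (lin0 H2); ring.
Qed.

Lemma S_lin1 u' : lin_form (fun u => S u u').
Proof.
have [l1 [l2 [c [H1 H2 H3]]]] := Hall u'.
apply: (lin_ext _ H2) => u.
rewrite -(HS_dd u u' (0, 0)).
have -> : dz u (dz u' g) (0,0) = dz u' g (0, 0 + u) - dz u' g (0, 0) by [].
by rewrite !H3 /= !(linD H2); ring.
Qed.

Lemma S_sym u u' : S u u' = S u' u.
Proof. by rewrite /S (addrC u u'); ring. Qed.

Lemma S_lin2 u : lin_form (S u).
Proof. by move=> a v w; rewrite !(S_sym u); apply: S_lin1. Qed.

Lemma S_pol x c d : S (br x c) (br x d) = 0.
Proof.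
have Z : forall y, S (br x y) (br x y) = 0.
  by move=> y; rewrite -(HS_dd _ _ (0, 0)) (Heis2 Hg).
have := Z (c + d); rewrite brDr (linD (S_lin1 _)) !(linD (S_lin2 _)) !Z.
rewrite (S_sym (br x d)) => E; lra.
Qed.

Definition Goal_b := exists (b : V1 -> V2 -> R) x0 z0,
  [/\ bilin12 b, (forall x x', b x (br x x') = 0) & b x0 z0 <> 0].

Lemma caseA u u' : S u u' <> 0 -> Goal_b.
Proof.
move=> Hu.
have [q [Hq Hq']] : exists q, q \in s /\ S (br q.1 q.2) u' <> 0.
  apply: NNPP => Hn; apply: Hu.
  refine (span_ind Hsp (P := fun u => S u u' = 0) _ _ _ u).
  - exact: (lin0 (S_lin1 u')).
  - by move=> u1 u2 H1 H2; rewrite (linD (S_lin1 _)) H1 H2 addr0.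
  - move=> q c Hq; rewrite (linZ (S_lin1 _)).
    case: (classic (S (br q.1 q.2) u' = 0)) => [->|Hne]; first by rewrite mulr0.
    by exfalso; apply: Hn; exists q.
exists (fun x z => S (br q.1 x) z), q.2, u'; split => //.
- split => [z|x].
  + by move=> a v w /=; rewrite brDr brZr (linD (S_lin1 _)) (linZ (S_lin1 _)).
  + exact: S_lin2.
- by move=> x x'; rewrite Hskew (linN (S_lin1 _)) S_pol oppr0.
Qed.

Definition phiB x := g (x, 0).
Definition Mz x u := dz u g (x, 0).
Definition bB x z := g (x, z) - g (x, 0) - g (0, z) + g (0, 0).

Lemma caseB : (forall u u', S u u' = 0) -> Goal_b.
Proof.
move=> S0.
have Mb : forall x z, bB x z = Mz x z - Mz 0 z.
  by move=> x z; rewrite /bB /Mz /dz /= add0r; ring.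
have Mlin : forall x, lin_form (Mz x).
  move=> x; apply: (lin_from_span Hsp).
  - by move=> u v; rewrite /Mz dz_add HS_dd S0 addr0.
  - by move=> q c Hq; rewrite /Mz Heis_scale.
have bl2 : forall x, lin_form (bB x).
  move=> x; apply: (lin_ext _ (lin_add (Mlin x) (lin_scale (-1) (Mlin 0)))) => z.
  by rewrite Mb; ring.
have bl1 : forall z, lin_form (fun x => bB x z).
  move=> z; have [l1 [l2 [c [H1 H2 H3]]]] := Hall z.
  apply: (lin_ext _ H1) => x; rewrite /bB.
  have := H3 (x, 0); have := H3 (0, 0); rewrite /dz /= !add0r (lin0 H1) => E1 E2; lra.
have bD1 : forall u v z, bB (u + v) z = bB u z + bB v z := fun u v z => linD (bl1 z) u v.
have bZ1 : forall a u z, bB (a *: u) z = a * bB u z := fun a u z => linZ (bl1 z) a u.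
have bZ2 : forall x a z, bB x (a *: z) = a * bB x z := fun x a z => linZ (bl2 x) a z.
have dec : forall x z, g (x, z) = phiB x + Mz 0 z + bB x z.
  by move=> x z; rewrite /bB /phiB /Mz /dz /= add0r; ring.
have Psi : forall x y, affine_fun (fun t => phiB (x + t *: y) + t ^+ 2 * bB y (br x y)).
  move=> x y; have Hxy := Hg (x, 0) y.
  apply: (aff_ext _ (aff_comb 1 (- (Mz 0 (br x y) + bB x (br x y))) Hxy (@aff_id R))) => t.
  rewrite /carnot_mul /= !add0r dec brZr (linZ (Mlin 0)) bZ2 bD1 bZ1; ring.
have hom : forall y t, phiB (t *: y) = phiB 0 + t * (phiB y - phiB 0).
  move=> y t; have := aff_val (Psi 0 y) t.
  rewrite br0l (lin0 (bl2 _)) scale0r scale1r !add0r !mulr0 !addr0 => ->.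
  by [].
have K : forall x y, bB y (br x y) = 0.
  move=> x y; have E1 := aff_mid (Psi x y); have E2 := aff_mid2 (Psi (2 *: x) y).
  rewrite /= scale1r scale0r addr0 in E1.
  rewrite /= scale0r addr0 brZl bZ2 -scalerDr in E2.
  have e : (-2) *: y = 2 *: ((-1) *: y) by rewrite scalerA mulrN1.
  rewrite e -scalerDr !hom in E2.
  rewrite !expr2 in E1 E2; lra.
have Hb0 : forall x x', bB x (br x x') = 0.
  by move=> x x'; rewrite Hskew (linN (bl2 _)) K oppr0.
have Lphi : lin_form (fun x => phiB x - phiB 0).
  apply: line_aff_lin => x y; apply: (aff_ext _ (Psi x y)) => t.
  by rewrite K mulr0 addr0.
case: (classic (exists x0 z0, bB x0 z0 <> 0)) => [[x0 [z0 H]]|Hn].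
  by exists bB, x0, z0; split => //; split.
exfalso; apply: Ng.
exists (fun x => phiB x - phiB 0), (Mz 0), (phiB 0); split => // -[x z].
rewrite dec /=.
have -> : bB x z = 0 by apply: NNPP => H; apply: Hn; exists x, z.
ring.
Qed.

Lemma core : Goal_b.
Proof.
case: (classic (exists u u', S u u' <> 0)) => [[u [u' H]]|Hn].
  exact: (caseA H).
by apply: caseB => u u'; apply: NNPP => H; apply: Hn; exists u, u'.
Qed.
End Core.

End Carnot.

Theorem proposition6p8 (R : realType) (V1 V2 : vectType R)
    (br : V1 -> V1 -> V2) :
  step2_carnot br ->
  (forall f : V1 * V2 -> R, usual_affine f -> horiz_affine br f) ->
  (exists f : V1 * V2 -> R, horiz_affine br f /\ ~ usual_affine f) ->
  exists x1 x2 x3 : V1,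
    free [:: br x1 x2; br x1 x3; br x2 x3] /\
    exists b : V1 -> V2 -> R,
      [/\ bilin12 b,
          (forall x x' : V1, b x (br x x') = 0)
        & b x1 (br x2 x3) = 1].
Proof.
move=> [Hbil Hskew [s Hsp] _] _ [f [Hf Nf]].
have [g [Hg Ng Hs]] := descend Hbil s Hf Nf.
have [b [x0 [z0 [Hb1 Hb2 Hb3]]]] := core Hbil Hskew Hsp Hg Ng Hs.
exact: (finish Hbil Hskew Hsp Hb1 Hb2 Hb3).
Qed.
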